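(* Let $K$ be an algebraically closed field of characteristic zero, $\mathcal{K}=K(t)$, $f(z) = z^2+t$, and $\alpha \in \mathcal{K}$. Then $\alpha$ does not realize portrait $(1,2)$ for $f$ if and only if $\alpha = 1/2$ or $\alpha$ satisfies condition $( * )$: \begin{itemize} \item $\alpha$ vanishes at $\mathfrak{p}_{-1}$; \item $\alpha^2 - \alpha + t + 1$ vanishes at $\mathfrak{p}_{-1}$, and possibly at $\mathfrak{p}_{-3/4}$, but at no other place; and \item if $\alpha^2 - \alpha + t + 1$ vanishes at $\mathfrak{p}_{-3/4}$, then $\alpha - 1/2$ also vanishes at $\mathfrak{p}_{-3/4}$. \end{itemize} Moreover, if in this case $\alpha^2-\alpha+t+1$ vanishes at $\mathfrak{p}_{-3/4}$, then it does so to order $1$.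
   Context: Places of $\mathcal{K}$ are those trivial on $K$, corresponding to $c\in\mathbb{P}^1(K)$; $\mathfrak{p}_c$ is the place at $t=c$, and an element vanishes at a place if its valuation there is positive. (Note $\alpha^2-\alpha+t+1 = \Phi_2(-\alpha,t)$ with $\Phi_2(z,t) = z^2+z+t+1$ the second dynatomic polynomial of $f$.) For $c \in K$, $f_c(z) = z^2+c$. A point $x$ has preperiodic portrait $(M,N)$ for $\phi$ if $M\ge0$ is minimal with $\phi^M(x)$ periodic and $\phi^M(x)$ has exact period $N$. We say $\alpha$ realizes portrait $(M,N)$ for $f$ if there exists $c \in K$ such that $\alpha(c)$ (reduction modulo $\mathfrak{p}_c$) has portrait $(M,N)$ for $f_c$. *)

(* Defs.v *)
From HB Require Import structures.
From mathcomp Require Import all_boot all_order all_algebra.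
Set Implicit Arguments. Unset Strict Implicit. Unset Printing Implicit Defensive.
Import GRing.Theory.
Local Open Scope ring_scope.

(* The rational function field K(t) is {fraction {poly K}}; t is 'X%:F and a
   constant c : K is (c%:P)%:F. *)
Notation "x %:F" := (@FracField.tofrac _ x).
Notation ratfun K := {fraction {poly K}}.
Notation rf_t := ('X%:F).
Notation rf_const c := ((c%:P)%:F).

(* Places of K(t) trivial on K: Some c is the place p_c at t = c,
   None is the place at infinity. *)
Definition place (K : fieldType) := option K.

(* The valuation of p/q at t=c is mup c p - mup c q, at infinity it is
   deg q - deg p; these do not depend on the chosen representation. *)
Definition vanishes_at (K : fieldType) (P : place K) (x : ratfun K) : Prop :=
  exists (p q : {poly K}), q != 0 /\ x = p%:F / q%:F /\
    (p = 0 \/ match P with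
              | Some c => (mup c q < mup c p)%N
              | None => (size p < size q)%N
              end).

Definition vanishes_to_order (K : fieldType) (c : K) (x : ratfun K) (n : nat) :
  Prop :=
  exists (p q : {poly K}), q != 0 /\ p != 0 /\ x = p%:F / q%:F /\
    mup c p = (mup c q + n)%N.

(* Reduction of x modulo p_c: x lies in the local ring at p_c and its
   residue is v. *)
Definition reduces_to (K : fieldType) (c : K) (x : ratfun K) (v : K) : Prop :=
  exists (p q : {poly K}), q.[c] != 0 /\ x = p%:F / q%:F /\ v = p.[c] / q.[c].

Definition is_periodic (T : Type) (phi : T -> T) (x : T) : Prop :=
  exists n : nat, (0 < n)%N /\ iter n phi x = x.

Definition has_exact_period (T : Type) (phi : T -> T) (x : T) (N : nat) : Prop :=
  (0 < N)%N /\ iter N phi x = x /\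
  forall m : nat, (0 < m)%N -> (m < N)%N -> iter m phi x <> x.

Definition has_portrait (T : Type) (phi : T -> T) (x : T) (M N : nat) : Prop :=
  is_periodic phi (iter M phi x) /\
  (forall m : nat, (m < M)%N -> ~ is_periodic phi (iter m phi x)) /\
  has_exact_period phi (iter M phi x) N.

Definition fc (K : fieldType) (c : K) : K -> K := fun z => z ^+ 2 + c.

Definition realizes (K : fieldType) (alpha : ratfun K) (M N : nat) : Prop :=
  exists (c v : K), reduces_to c alpha v /\ has_portrait (fc c) v M N.

Definition dyn2 (K : fieldType) (alpha : ratfun K) : ratfun K :=
  alpha ^+ 2 - alpha + rf_t + 1.

Definition one_half (K : fieldType) : K := (2%:R)^-1.
Definition mthreequarters (K : fieldType) : K := - (3%:R / 4%:R).
Arguments one_half : clear implicits.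
Arguments mthreequarters : clear implicits.

Definition cond_star (K : fieldType) (alpha : ratfun K) : Prop :=
  vanishes_at (Some (-1)) alpha /\
  vanishes_at (Some (-1)) (dyn2 alpha) /\
  (forall P : place K, vanishes_at P (dyn2 alpha) ->
       P = Some (-1) \/ P = Some (mthreequarters K)) /\
  (vanishes_at (Some (mthreequarters K)) (dyn2 alpha) ->
       vanishes_at (Some (mthreequarters K)) (alpha - rf_const (one_half K))).

(* Main.v *)
Require Import Defs.
From HB Require Import structures.
From mathcomp Require Import all_boot all_order all_algebra.
From mathcomp Require Import ring zify.
Import GRing.Theory.
Local Open Scope ring_scope.
Set Implicit Arguments. Unset Strict Implicit.


Section FracRep.
Local Open Scope quotient_scope.
Lemma frac_rep (R : idomainType) (x : {fraction R}) :
  exists n d : R, d != 0 /\ x = n%:F / d%:F.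
Proof.
elim/quotW: x => r.
exists (\n_r), (\d_r); split; first exact: denom_ratioP.
have dF : (\d_r)%:F != 0 by rewrite tofrac_eq0 denom_ratioP.
apply: (mulIf dF); rewrite mulfVK //.
apply/eqP. rewrite piE /= /FracField.equivf /FracField.mulf.
rewrite !numden_Ratio ?oner_eq0 ?mulf_neq0 ?denom_ratioP ?oner_eq0 //.
by rewrite !mulr1 mulrC.
Qed.
End FracRep.

Section S.
Variable K : fieldType.
Implicit Types p q a b : {poly K}.

Lemma frac_eq a b p q : b != 0 -> q != 0 ->
  a%:F / b%:F = p%:F / q%:F -> a * q = p * b.
Proof.
move=> b0 q0 e.
have bF : b%:F != 0 by rewrite tofrac_eq0.
have qF : q%:F != 0 by rewrite tofrac_eq0.
apply/eqP; rewrite -tofrac_eq !tofracM.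
have H := @eqr_div _ (a%:F) (b%:F) (p%:F) (q%:F) bF qF.
by rewrite -H e.
Qed.

Lemma coprime_rep_aux n d : d != 0 ->
  exists p q, q != 0 /\ coprimep p q /\ n%:F / d%:F = p%:F / q%:F.
Proof.
move=> d0.
set g := gcdp n d.
have g0 : g != 0 by rewrite gcdp_eq0 negb_and d0 orbT.
have En := divpK (dvdp_gcdl n d); have Ed := divpK (dvdp_gcdr n d).
rewrite -/g in En Ed.
exists (n %/ g), (d %/ g); split.
  apply: contra d0 => /eqP e; by rewrite -Ed e mul0r.
split; first by apply: coprimep_div_gcd; rewrite d0 orbT.
have gF : g%:F != 0 by rewrite tofrac_eq0.
rewrite -{1}En -{1}Ed !tofracM.
by rewrite invfM mulrACA (mulfV gF) mulr1.
Qed.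

Lemma coprime_rep (x : {fraction {poly K}}) :
  exists p q, q != 0 /\ coprimep p q /\ x = p%:F / q%:F.
Proof.
have [n [d [d0 ->]]] := frac_rep x.
exact: coprime_rep_aux.
Qed.

Lemma vanish_root a b c : b != 0 ->
  vanishes_at (Some c) (a%:F / b%:F) -> root a c.
Proof.
move=> b0 [p1 [q1 [q10 [e H]]]].
have [->|a0] := eqVneq a 0; first by rewrite root0.
have E := frac_eq b0 q10 e.
have p10 : p1 != 0.
  apply/eqP => p10; move: E; rewrite p10 mul0r => /eqP.
  by rewrite mulf_eq0 (negbTE a0) (negbTE q10).
case: H => [/eqP|H]; first by rewrite (negbTE p10).
have := congr1 (mup c) E; rewrite !mupM // => E2.
rewrite -dvdp_XsubCl XsubC_dvd //; lia.
Qed.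

Lemma root_vanish a b c : b.[c] != 0 -> root a c ->
  vanishes_at (Some c) (a%:F / b%:F).
Proof.
move=> bc ac; have b0 : b != 0 by apply: contraNneq bc => ->; rewrite horner0.
exists a, b; split => //; split => //.
have [->|a0] := eqVneq a 0; first by left.
right; rewrite (mupNroot bc); move: ac; rewrite -dvdp_XsubCl XsubC_dvd //.
Qed.

Lemma no_vanish_inf a b : b != 0 -> a != 0 -> (size b <= size a)%N ->
  ~ vanishes_at None (a%:F / b%:F).
Proof.
move=> b0 a0 sz [p1 [q1 [q10 [e H]]]].
have E := frac_eq b0 q10 e.
have p10 : p1 != 0.
  apply/eqP => p10; move: E; rewrite p10 mul0r => /eqP.
  by rewrite mulf_eq0 (negbTE a0) (negbTE q10).
case: H => [/eqP|H]; first by rewrite (negbTE p10).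
have := congr1 (fun r : {poly K} => size r) E; rewrite !size_mul //.
have s1 : (0 < size p1)%N by rewrite size_poly_gt0.
have s2 : (0 < size q1)%N by rewrite size_poly_gt0.
have s3 : (0 < size a)%N by rewrite size_poly_gt0.
have s4 : (0 < size b)%N by rewrite size_poly_gt0.
move=> h; move: s1 s2 s3 s4 sz H h.
set x1 := size a; set x2 := size b; set x3 := size p1; set x4 := size q1.
move=> *; lia.
Qed.

Lemma reduce_elim p q c v : q != 0 -> coprimep p q ->
  reduces_to c (p%:F / q%:F) v -> q.[c] != 0 /\ v = p.[c] / q.[c].
Proof.
move=> q0 cop [p1 [q1 [q1c [e ->]]]].
have q10 : q1 != 0 by apply: contraNneq q1c => ->; rewrite horner0.
have E := frac_eq q0 q10 e.
have Ec := congr1 (fun r => r.[c]) E; rewrite /= !hornerM in Ec.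
have qc : q.[c] != 0.
  apply/eqP => qc; rewrite qc mulr0 in Ec.
  have pc : root p c.
    by rewrite /root; apply/eqP/(mulIf q1c); rewrite mul0r Ec.
  by move: (coprimep_root cop pc); rewrite qc eqxx.
split => //; apply/eqP; by rewrite eqr_div // Ec.
Qed.

End S.

Section Dyn.
Variable K : fieldType.
Hypothesis two0 : (2%:R : K) != 0.

Lemma iter_orbit (c v : K) : v ^+ 2 - v + c + 1 = 0 ->
  forall n, iter n.+1 (fc c) v = v - 1 \/ iter n.+1 (fc c) v = - v.
Proof.
move=> E; elim=> [|n IH].
  left; rewrite /= /fc; apply/eqP; rewrite -subr_eq0; apply/eqP.
  by rewrite -E; ring.
rewrite iterS; case: IH => ->; rewrite /fc.
  right; apply/eqP; rewrite -subr_eq0; apply/eqP; by rewrite -E; ring.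
left; apply/eqP; rewrite -subr_eq0; apply/eqP; by rewrite -E; ring.
Qed.

Lemma portrait_iff (c v : K) :
  has_portrait (fc c) v 1 2 <->
  (v ^+ 2 - v + c + 1 = 0 /\ 4%:R * c + 3%:R != 0 /\ ~ (c = -1 /\ v = 0)).
Proof.
split.
  move=> [_ [Hnp [_ [H2 Hm]]]].
  have Hv : ~ is_periodic (fc c) v := Hnp 0%N isT.
  have H1 : iter 1 (fc c) (fc c v) <> fc c v := Hm 1%N isT isT.
  rewrite /= /fc in H1 H2.
  set w := v ^+ 2 + c in H1 H2.
  have Hw : w ^+ 2 + w + c + 1 = 0.
    have : (w ^+ 2 - w + c) * (w ^+ 2 + w + c + 1) = 0.
      have -> : (w ^+ 2 - w + c) * (w ^+ 2 + w + c + 1) =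
                ((w ^+ 2 + c) ^+ 2 + c) - w by ring.
      by rewrite H2 subrr.
    move/eqP; rewrite mulf_eq0 => /orP [|/eqP //].
    move=> /eqP h; exfalso; apply: H1; apply/eqP; rewrite -subr_eq0; apply/eqP.
    by rewrite -h; ring.
  have Hvw : (v - (- 1 - w)) * (v + (- 1 - w)) = 0.
    have -> : (v - (- 1 - w)) * (v + (- 1 - w)) =
       - (w ^+ 2 + w + c + 1) + (v ^+ 2 + c - w) by rewrite /w; ring.
    by rewrite Hw /w subrr addr0 oppr0.
  have {Hvw} Hv1 : v = 1 + w.
    move/eqP: Hvw; rewrite mulf_eq0 => /orP [/eqP Hv0|/eqP Hv0].
      exfalso; apply: Hv; exists 2%N; split => //=; rewrite /fc -/w.
      apply/eqP; rewrite -subr_eq0; apply/eqP.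
      have -> : w ^+ 2 + c - v = (w ^+ 2 + w + c + 1) - (v - (-1 - w)) by ring.
      by rewrite Hw Hv0 subrr.
    apply/eqP; rewrite -subr_eq0; apply/eqP; rewrite -Hv0; ring.
  have E : v ^+ 2 - v + c + 1 = 0.
    have Hw1' : v ^+ 2 + c = v - 1 by rewrite -/w Hv1; ring.
    have -> : v ^+ 2 - v + c + 1 = (v ^+ 2 + c) - (v - 1) by ring.
    by rewrite Hw1' subrr.
  split => //; split.
    apply/eqP => H43; apply: H1.
    have h2v : (v *+ 2 - 1) ^+ 2 = 0.
      have -> : (v *+ 2 - 1) ^+ 2 = 4%:R * (v ^+ 2 - v + c + 1) - (4%:R * c + 3%:R) by ring.
      by rewrite E H43; ring.
    have h2v' : v *+ 2 - 1 = 0 by apply/eqP; move/eqP: h2v; rewrite expf_eq0.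
    apply/eqP; rewrite -subr_eq0; apply/eqP.
    have Hw1 : w = v - 1 by rewrite Hv1; ring.
    rewrite Hw1.
    have -> : (v - 1) ^+ 2 + c - (v - 1) = (v ^+ 2 - v + c + 1) - (v *+ 2 - 1) by ring.
    by rewrite E h2v' subrr.
  move=> [c1 v0]; apply: Hv; exists 2%N; split => //=; rewrite /fc.
  by rewrite v0 c1; ring.
move=> [E [H43 Hn]].
have Hf : v ^+ 2 + c = v - 1.
  by apply/eqP; rewrite -subr_eq0; apply/eqP; rewrite -E; ring.
have Hf2 : (v - 1) ^+ 2 + c = - v.
  by apply/eqP; rewrite -subr_eq0; apply/eqP; rewrite -E; ring.
split; last split.
- exists 2%N; split => //=; rewrite /fc.
  by rewrite !Hf Hf2 sqrrN Hf.
- move=> m; rewrite ltnS leqn0 => /eqP -> /= [n [n0 Hn']].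
  case: n n0 Hn' => // n _.
  case: (iter_orbit E n) => -> Hn'.
    have : (v - 1) - v = 0 by rewrite Hn' subrr.
    have -> : (v - 1) - v = - 1 by ring.
    by move/eqP; rewrite oppr_eq0 oner_eq0.
  have h2 : 2%:R * v = 0 by rewrite mulr_natl mulr2n -{1}Hn' addNr.
  move/eqP: h2; rewrite mulf_eq0 (negbTE two0) /= => /eqP v0.
  apply: Hn; split => //.
  by move/eqP: E; rewrite v0 expr0n /= subr0 add0r addr_eq0 => /eqP.
- split => //; split.
    by rewrite /= /fc !Hf Hf2 sqrrN Hf.
  move=> m m0 m2; have -> : m = 1%N by case: m m0 m2 => [|[|]].
  rewrite /= /fc Hf Hf2 => h.
  have h2v : v *+ 2 - 1 = 0.
    have -> : v *+ 2 - 1 = v + (v - 1) by ring.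
    by rewrite -h addrN.
  move: H43; have -> : 4%:R * c + 3%:R = 4%:R * (v ^+ 2 - v + c + 1) - (v *+ 2 - 1) ^+ 2 by ring.
  by rewrite E h2v expr0n /= mulr0 subr0 eqxx.
Qed.

End Dyn.

Section Mup.
Variable K : fieldType.
Implicit Types a b : {poly K}.

Lemma mup_addr (c : K) a b : a != 0 -> ('X - c%:P) ^+ (mup c a).+1 %| b ->
  mup c (a + b) = mup c a.
Proof.
move=> a0 db; set i := mup c a in db *.
have da : ('X - c%:P) ^+ i %| a by rewrite -mup_geq.
have nda : ~~ (('X - c%:P) ^+ i.+1 %| a) by rewrite -mup_ltn.
have ab0 : a + b != 0.
  apply: contra nda => /eqP h; have -> : a = - b by apply/eqP; rewrite -addr_eq0 h.
  by rewrite dvdpNr.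
apply/eqP; rewrite eqn_leq mup_leq // mup_geq // (dvdp_addl _ db) nda /=.
by apply: dvdp_add da (dvdp_trans (dvdp_exp2l _ (leqnSn i)) db).
Qed.

Lemma mup_lt_size (c : K) a : a != 0 -> (mup c a < size a)%N.
Proof.
move=> a0; have : ('X - c%:P) ^+ (mup c a) %| a by rewrite -mup_geq.
by move/(dvdp_leq a0); rewrite size_exp_XsubC.
Qed.

End Mup.


Lemma gen_dyn2 (F : fieldType) (x y t : F) : y != 0 ->
  (x / y) ^+ 2 - x / y + t + 1 = (x ^+ 2 - x * y + (t + 1) * y ^+ 2) / y ^+ 2.
Proof. by move=> y0; field. Qed.

Section Main.
Variable K : closedFieldType.
Hypothesis hK : [pchar K] =i pred0.

Lemma two0 : (2%:R : K) != 0.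
Proof.
apply/negP => /eqP h.
have : (2%N \in [pchar K]) by rewrite inE /= h eqxx.
by rewrite hK.
Qed.

Lemma four0 : (4%:R : K) != 0.
Proof. by rewrite (_ : 4%N = 2 * 2)%N // natrM mulf_neq0 // two0. Qed.

Local Notation c0 := (mthreequarters K).

Lemma h4c : 4%:R * c0 = - 3%:R.
Proof. by rewrite /mthreequarters mulrN mulrCA mulfV ?four0 // mulr1. Qed.

Lemma c0E (c : K) : c = c0 <-> 4%:R * c + 3%:R = 0.
Proof.
split; first by move=> ->; rewrite h4c addNr.
move=> h; apply: (mulfI four0); rewrite h4c; apply/eqP; rewrite -addr_eq0 h.
done.
Qed.

Lemma half2 : 2%:R * one_half K = 1.
Proof. by rewrite /one_half mulfV // two0. Qed.

Variables (p q : {poly K}).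
Hypotheses (q0 : q != 0) (cop : coprimep p q).

Definition N := p ^+ 2 - p * q + ('X + 1) * q ^+ 2.
Definition r := p *+ 2 - q.
Definition s4 := (4%:R : K)%:P * ('X - c0%:P).

Lemma dyn2E : dyn2 (p%:F / q%:F) = N%:F / (q ^+ 2)%:F.
Proof.
have qF : q%:F != 0 by rewrite tofrac_eq0.
rewrite /dyn2 /N (gen_dyn2 _ _ qF).
by rewrite !expr2 !(tofracD, tofracN, tofracM, tofrac1).
Qed.

Lemma NE c : N.[c] = p.[c] ^+ 2 - p.[c] * q.[c] + (c + 1) * q.[c] ^+ 2.
Proof. by rewrite /N !hornerE. Qed.

Lemma rootN_q c : root N c -> q.[c] != 0.
Proof.
move=> /eqP Nc; apply/negP => /eqP qc.
have pc : root p c.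
  move: Nc; rewrite NE qc expr0n /= !mulr0 subr0 addr0 => /eqP.
  by rewrite expf_eq0.
by move: (coprimep_root cop pc); rewrite qc eqxx.
Qed.

Lemma rootNE c : q.[c] != 0 ->
  root N c <-> (p.[c] / q.[c]) ^+ 2 - p.[c] / q.[c] + c + 1 = 0.
Proof.
move=> qc; rewrite /root.
have -> : N.[c] = q.[c] ^+ 2 * ((p.[c] / q.[c]) ^+ 2 - p.[c] / q.[c] + c + 1).
  by rewrite NE; field.
rewrite mulf_eq0 expf_eq0 (negbTE qc) /=; split => [/eqP //|->//].
Qed.

Lemma s4E : s4 = 'X *+ 4 + 3%:R.
Proof.
by rewrite /s4 mulrBr -polyCM h4c polyCN !polyC_natr mulr_natl opprK.
Qed.

Lemma NidE : (4%:R : K)%:P * N = r ^+ 2 + s4 * q ^+ 2.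
Proof. by rewrite s4E polyC_natr /N /r; ring. Qed.


Lemma rootC4 c : ~~ root ((4%:R : K)%:P) c.
Proof. by rewrite rootC four0. Qed.

Lemma s40 : s4 != 0.
Proof. by rewrite /s4 mulf_neq0 ?polyC_eq0 ?four0 ?polyXsubC_eq0. Qed.

Lemma s4_size : size s4 = 2%N.
Proof. by rewrite /s4 size_Cmul ?four0 // size_XsubC. Qed.

Lemma s4_mup : mup c0 s4 = 1%N.
Proof.
rewrite /s4 mupMr ?rootC4 //.
by rewrite -[X in mup _ X]expr1 mup_XsubCX; case: eqP.
Qed.

Lemma s4_root c : root s4 c = (c == c0).
Proof. by rewrite /s4 rootM (negbTE (rootC4 c)) root_XsubC. Qed.

Lemma size_add_max (a b : {poly K}) : size a != size b ->
  size (a + b) = maxn (size a) (size b).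
Proof.
move=> h; case: (ltngtP (size a) (size b)) => [lt|gt|e]; last by rewrite e eqxx in h.
  by rewrite addrC size_polyDl // (maxn_idPr (ltnW lt)).
by rewrite size_polyDl // (maxn_idPl (ltnW gt)).
Qed.

Lemma N_size : (size (q ^+ 2) < size N)%N.
Proof.
have sq : (0 < size q)%N by rewrite size_poly_gt0.
have q20 : q ^+ 2 != 0 by rewrite expf_neq0.
have e := congr1 (fun x : {poly K} => size x) NidE; rewrite /= size_Cmul ?four0 // in e.
have sq2 : size (q ^+ 2) = (size q + size q).-1 by rewrite expr2 size_mul.
have sB : size (s4 * q ^+ 2) = (2 + (size q + size q).-1).-1.
  rewrite size_mul ?s40 //; move: s4_size sq2.
  set a := size s4; set b := size (q ^+ 2); set x := size q; lia.
have [r0|r0] := eqVneq r 0.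
  rewrite r0 expr0n /= add0r in e.
  move: e sB sq2 sq; set z := size (s4 * q ^+ 2).
  set x := size q; set u := size (q ^+ 2); set v := size N; lia.
have sr : (0 < size r)%N by rewrite size_poly_gt0.
have sA : size (r ^+ 2) = (size r + size r).-1 by rewrite expr2 size_mul.
have hne : size (r ^+ 2) != size (s4 * q ^+ 2).
  apply/eqP; move: sA sB sr sq; set y := size (r ^+ 2).
  set z := size (s4 * q ^+ 2); set x := size q; set w := size r; lia.
rewrite (size_add_max hne) in e.
move: e sA sB sq2 sr sq; set y := size (r ^+ 2); set z := size (s4 * q ^+ 2).
set x := size q; set w := size r; set u := size (q ^+ 2); set v := size N; lia.
Qed.

Lemma N0 : N != 0.
Proof. by rewrite -size_poly_gt0; apply: leq_ltn_trans N_size. Qed.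

Lemma mupN_one : root N c0 -> mup c0 N = 1%N.
Proof.
move=> Nc; have qc := rootN_q Nc.
have s4c : root s4 c0 by rewrite s4_root eqxx.
have rc : root r c0.
  have := congr1 (fun x : {poly K} => x.[c0]) NidE.
  rewrite /= hornerD (hornerM ((4%:R : K)%:P)) (hornerM s4) hornerC (rootP Nc) (rootP s4c) mulr0 mul0r addr0.
  by rewrite horner_exp => /esym/eqP; rewrite expf_eq0.
have B0 : s4 * q ^+ 2 != 0 by rewrite mulf_neq0 ?s40 ?expf_neq0.
have q2c : ~~ root (q ^+ 2) c0 by rewrite /root horner_exp expf_eq0 (negbTE qc) andbF.
have mB : mup c0 (s4 * q ^+ 2) = 1%N by rewrite mupMl // s4_mup.
have dv : ('X - c0%:P) ^+ (mup c0 (s4 * q ^+ 2)).+1 %| r ^+ 2.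
  by rewrite mB; apply: dvdp_exp2r; rewrite dvdp_XsubCl.
have := mup_addr B0 dv; rewrite addrC -NidE mupMr ?rootC4 // => ->.
exact: mB.
Qed.

Lemma allroots_r0 : (forall c, root N c -> c = c0) -> r = 0.
Proof.
move=> H; apply/eqP; apply/negP => /negP r0.
have N00 := N0.
have [s Es] := closed_field_poly_normal N.
have lc0 : lead_coef N != 0 by rewrite lead_coef_eq0.
have allc : all (pred1 c0) s.
  apply/allP => z zs /=; apply/eqP; apply: H.
  by rewrite Es rootZ // root_prod_XsubC.
have mN : mup c0 N = size s.
  rewrite Es -mul_polyC mupMr ?rootC // mu_prod_XsubC.
  by move: allc; rewrite all_count => /eqP.
have sN : size N = (size s).+1 by rewrite {1}Es size_scale // size_prod_XsubC.
have mM : mup c0 ((4%:R : K)%:P * N) = mup c0 N by rewrite mupMr ?rootC4.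
have sM : size ((4%:R : K)%:P * N) = size N by rewrite size_Cmul ?four0.
rewrite NidE in mM sM.
have sq : (0 < size q)%N by rewrite size_poly_gt0.
have q20 : q ^+ 2 != 0 by rewrite expf_neq0.
have B0 : s4 * q ^+ 2 != 0 by rewrite mulf_neq0 ?s40.
have A0 : r ^+ 2 != 0 by rewrite expf_neq0.
have sq2 : size (q ^+ 2) = (size q + size q).-1 by rewrite expr2 size_mul.
have sB : size (s4 * q ^+ 2) = (2 + (size q + size q).-1).-1.
  rewrite size_mul ?s40 //; move: s4_size sq2.
  set a := size s4; set b := size (q ^+ 2); set x := size q; lia.
have sr : (0 < size r)%N by rewrite size_poly_gt0.
have sA : size (r ^+ 2) = (size r + size r).-1 by rewrite expr2 size_mul.
have hne : size (r ^+ 2) != size (s4 * q ^+ 2).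
  apply/eqP; move: sA sB sr sq; set y := size (r ^+ 2).
  set z := size (s4 * q ^+ 2); set x := size q; set w := size r; lia.
rewrite (size_add_max hne) in sM.
have mA : mup c0 (r ^+ 2) = (mup c0 r + mup c0 r)%N by rewrite expr2 (mupM _ r0 r0).
have mB : mup c0 (s4 * q ^+ 2) = (mup c0 s4 + (mup c0 q + mup c0 q))%N.
  by rewrite (mupM _ s40 q20) expr2 (mupM _ q0 q0).
have ms4 := s4_mup.
have mr := mup_lt_size c0 r0.
have mq := mup_lt_size c0 q0.
have [lt|gt|eq] := ltngtP (mup c0 (r ^+ 2)) (mup c0 (s4 * q ^+ 2)).
- have dv : ('X - c0%:P) ^+ (mup c0 (r ^+ 2)).+1 %| s4 * q ^+ 2 by rewrite -mup_geq.
  rewrite (mup_addr A0 dv) in mM.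
  move: mM sM mN sN sA sB mA mB ms4 mr mq lt sr sq.
  set y := size (r ^+ 2); set z := size (s4 * q ^+ 2); set x := size q.
  set w := size r; set v := size N; set t := size s.
  set m1 := mup c0 (r ^+ 2); set m2 := mup c0 (s4 * q ^+ 2); set m3 := mup c0 N.
  set m4 := mup c0 r; set m5 := mup c0 q; set m6 := mup c0 s4; lia.
- have dv : ('X - c0%:P) ^+ (mup c0 (s4 * q ^+ 2)).+1 %| r ^+ 2 by rewrite -mup_geq.
  rewrite addrC (mup_addr B0 dv) in mM.
  move: mM sM mN sN sA sB mA mB ms4 mr mq gt sr sq.
  set y := size (r ^+ 2); set z := size (s4 * q ^+ 2); set x := size q.
  set w := size r; set v := size N; set t := size s.
  set m1 := mup c0 (r ^+ 2); set m2 := mup c0 (s4 * q ^+ 2); set m3 := mup c0 N.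
  set m4 := mup c0 r; set m5 := mup c0 q; set m6 := mup c0 s4; lia.
- move: eq mA mB ms4.
  set m1 := mup c0 (r ^+ 2); set m2 := mup c0 (s4 * q ^+ 2).
  set m4 := mup c0 r; set m5 := mup c0 q; set m6 := mup c0 s4; lia.
Qed.

End Main.


Section Final.
Variable K : closedFieldType.
Hypothesis hK : [pchar K] =i pred0.
Local Notation c0 := (mthreequarters K).
Local Notation h := (one_half K).

Lemma m1c0 : (-1 : K) != c0.
Proof.
apply/eqP => /(c0E hK); have -> : 4%:R * (-1) + 3%:R = - 1 :> K by ring.
by move/eqP; rewrite oppr_eq0 oner_eq0.
Qed.

Variables (p q : {poly K}).
Hypotheses (q0 : q != 0) (cop : coprimep p q).

Lemma rootN_r : root (N p q) c0 -> root (r p q) c0.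
Proof.
move=> Nc.
have s4c : root (s4 K) c0 by rewrite (s4_root hK) eqxx.
have := congr1 (fun x : {poly K} => x.[c0]) (NidE hK p q).
rewrite /= hornerD (hornerM ((4%:R : K)%:P)) (hornerM (s4 K)) hornerC (rootP Nc).
rewrite (rootP s4c) mulr0 mul0r addr0.
by rewrite horner_exp => /esym/eqP; rewrite expf_eq0.
Qed.

Lemma realizesE : realizes (p%:F / q%:F) 1 2 <->
  exists c, root (N p q) c /\ c != c0 /\ ~ (c = -1 /\ root p c).
Proof.
split.
  move=> [c [v [red port]]].
  have [qc ev] := reduce_elim q0 cop red.
  have [E [h43 hn]] := (portrait_iff (two0 hK) c v).1 port.
  exists c; split; first by apply/(rootNE p qc); rewrite -ev.
  split; first by apply/eqP => /(c0E hK) e; rewrite e eqxx in h43.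
  by move=> [c1 pc]; apply: hn; split => //; rewrite ev (rootP pc) mul0r.
move=> [c [Nc [cc0 hn]]]; have qc := rootN_q cop Nc.
exists c, (p.[c] / q.[c]); split; first by exists p, q.
apply/(portrait_iff (two0 hK)); split; first by apply/(rootNE p qc).
split.
  by apply/eqP => e; move/(c0E hK): e => e; rewrite e eqxx in cc0.
move=> [c1 v0]; apply: hn; split => //.
by move/eqP: v0; rewrite mulf_eq0 invr_eq0 (negbTE qc) orbF.
Qed.

End Final.

Theorem lemma5p13 (K : closedFieldType) (hK : [pchar K] =i pred0)
    (alpha : {fraction {poly K}}) :
  (~ realizes alpha 1 2 <-> (alpha = rf_const (one_half K) \/ cond_star alpha)) /\
  (~ realizes alpha 1 2 -> vanishes_at (Some (mthreequarters K)) (dyn2 alpha) ->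
     vanishes_to_order (mthreequarters K) (dyn2 alpha) 1).
Proof.
have [p [q [q0 [cop ->]]]] := coprime_rep alpha.
set c0 := mthreequarters K.
set h := one_half K.
have RE := realizesE hK q0 cop.
have D2 := dyn2E p q0.
have q20 : q ^+ 2 != 0 by rewrite expf_neq0.
have N00 := N0 hK q0 cop.
have MO : vanishes_at (Some c0) (dyn2 (p%:F / q%:F)) ->
          vanishes_to_order c0 (dyn2 (p%:F / q%:F)) 1.
  rewrite D2 => /(vanish_root q20) Nc.
  have qc := rootN_q cop Nc.
  exists (N p q), (q ^+ 2); split => //; split => //; split => //.
  rewrite (mupN_one hK q0 cop Nc) mupNroot //.
  by rewrite /root horner_exp expf_eq0 (negbTE qc) andbF.
split; last by move=> _; exact: MO.
have hP : h%:P * 2%:R = 1 :> {poly K}.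
  by rewrite -polyC_natr -polyCM mulrC half2 // hK.
split.
  move=> nR.
  have H : forall c, root (N p q) c -> c = c0 \/ (c = -1 /\ root p c).
    move=> c Nc; case: (eqVneq c c0) => [->|cc0]; first by left.
    right; case: (eqVneq c (-1)) => c1; last first.
      exfalso; apply: nR; apply/RE; exists c; split => //; split => //.
      by move=> [e _]; rewrite e eqxx in c1.
    case: (boolP (root p c)) => pc; first by split.
    exfalso; apply: nR; apply/RE; exists c; split => //; split => //.
    by move=> [_ e]; rewrite e in pc.
  case: (boolP (root (N p q) (-1))) => N1.
  - right.
    have p1 : root p (-1).
      case: (H _ N1) => [e|[]//]; by move: (m1c0 hK); rewrite e eqxx.
    have q1 := rootN_q cop N1.
    split; first exact: root_vanish q1 p1.
    split.
      rewrite D2; apply: root_vanish => //.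
      by rewrite horner_exp expf_neq0.
    split.
      move=> [c|] V; rewrite D2 in V.
        have Nc := vanish_root q20 V.
        by case: (H c Nc) => [->|[-> _]]; [right|left].
      by exfalso; apply: (no_vanish_inf q20 N00 (ltnW (N_size hK q0 cop))).
    rewrite D2 => /(vanish_root q20) Nc.
    have qc := rootN_q cop Nc.
    have rc := rootN_r hK Nc.
    have qF : q%:F != 0 by rewrite tofrac_eq0.
    have -> : p%:F / q%:F - (h%:P)%:F = (p - h%:P * q)%:F / q%:F.
      by rewrite tofracB tofracM mulrBl mulfK.
    apply: root_vanish qc _.
    move: rc; rewrite /root /r !hornerE => /eqP rc.
    have -> : p.[c0] - h * q.[c0] = h * (p.[c0] *+ 2 - q.[c0]) + p.[c0] * (1 - 2%:R * h)
      by ring.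
    by rewrite rc half2 // subrr !mulr0 addr0.
  - left.
    have r0 : r p q = 0.
      apply: (allroots_r0 hK q0 cop) => c Nc.
      case: (H c Nc) => [//|[c1 _]]; by move: Nc; rewrite c1 (negbTE N1).
    have qE : q = p *+ 2.
      by apply/eqP; rewrite eq_sym -subr_eq0; apply/eqP; exact: r0.
    have ep : p = h%:P * q by rewrite qE -mulr_natr mulrCA hP mulr1.
    have qF : q%:F != 0 by rewrite tofrac_eq0.
    by rewrite {1}ep tofracM mulfK.
move=> [half|cs] R; have [c [Nc [cc0 hn]]] := RE.1 R.
  have qc := rootN_q cop Nc.
  have ep : p = h%:P * q.
    apply/eqP; rewrite -tofrac_eq tofracM -half mulfVK //.
    by rewrite tofrac_eq0.
  move: Nc; rewrite (rootNE p qc) ep hornerM hornerC mulfK // => E.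
  move: cc0; have -> : c = c0.
    apply/(c0E hK).
    have -> : 4%:R * c + 3%:R = 4%:R * (h ^+ 2 - h + c + 1) - (2%:R * h - 1) ^+ 2 by ring.
    by rewrite E half2 // subrr expr0n mulr0 subr0.
  by rewrite eqxx.
move: cs => [cs1 [cs2 [cs3 cs4]]].
have qc := rootN_q cop Nc.
have V : vanishes_at (Some c) (dyn2 (p%:F / q%:F)).
  rewrite D2; apply: root_vanish => //.
  by rewrite horner_exp expf_neq0.
case: (cs3 _ V) => [[e]|[e]].
  by apply: hn; split => //; rewrite e; exact: vanish_root q0 cs1.
by rewrite e eqxx in cc0.
Qed.
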